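(* Let $T_1$ be a quadtree in $\mathbb{R}^d$ with $n$ cells. For every $j$ with $1\le j\le d+1$, the set $T_j$ of cells with brand $j$ in the extended quadtree construction has $\mathcal{O}(2^d n)$ cells.
   Context: A quadtree on an axis-aligned root hypercube $R\subset\mathbb{R}^d$ is a hierarchical decomposition in which every node has an associated axis-aligned hypercube (cell) and is either a leaf or has $2^d$ equal-sized children whose cells subdivide its cell. The size $|C|$ of a cell is its edge length. Two cells are neighbors if they are interior-disjoint and share (part of) a $(d-1)$-dimensional facet. For an integer $j$, a cell $C$ is $2^j$-smooth if every leaf neighboring $C$ has size at most $2^j|C|$. Extended quadtree: the cells of a given quadtree $T_1$ are called true cells and get brand $1$. Recursively, for $j\ge1$, let $T^j$ be the quadtree formed by $\bigcup_{i\le j}T_i$, and let $T_{j+1}$ be the minimal set of cells obtained by splitting cells of $T^j$ such that every cell of $T_j$ is $2^j$-smooth in the resulting quadtree; the cells of $T_{j+1}$ get brand $j+1$. The extended quadtree is $T^*=T^{d+1}$. *)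

(* Defs.v *)
From mathcomp Require Import all_boot all_order.
From mathcomp Require Import finmap.
Set Implicit Arguments. Unset Strict Implicit. Unset Printing Implicit Defensive.
Local Open Scope fset_scope.

(* The root hypercube is normalized to [0,1]^d.  A cell at level k with
   position a : 'I_d -> nat is the box  prod_i [a_i/2^k, (a_i+1)/2^k];
   its size (edge length) is 2^-k. *)
Definition cell (d : nat) := (nat * {ffun 'I_d -> nat})%type.

Definition lvl {d} (c : cell d) : nat := c.1.
Definition pos {d} (c : cell d) (i : 'I_d) : nat := c.2 i.

Definition valid_cell {d} (c : cell d) : Prop := forall i, pos c i < 2 ^ lvl c.

Definition root_cell (d : nat) : cell d := (0, [ffun _ => 0]).

Definition is_child {d} (c' c : cell d) : Prop :=
  lvl c' = (lvl c).+1 /\ forall i, pos c' i %/ 2 = pos c i.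

Definition quadtree {d} (Q : {fset cell d}) : Prop :=
  [/\ root_cell d \in Q,
      (forall c, c \in Q -> valid_cell c),
      (forall c' c, c' \in Q -> is_child c' c -> c \in Q) &
      (forall c, c \in Q -> (exists2 c', is_child c' c & c' \in Q) ->
                 forall c', is_child c' c -> c' \in Q)].

Definition leaf {d} (Q : {fset cell d}) (c : cell d) : Prop :=
  c \in Q /\ forall c', is_child c' c -> c' \notin Q.

(* Endpoints of the i-th side of c, measured in units of 2^-L (L >= lvl c). *)
Definition lo {d} (c : cell d) (i : 'I_d) (L : nat) : nat := pos c i * 2 ^ (L - lvl c).
Definition hi {d} (c : cell d) (i : 'I_d) (L : nat) : nat := (pos c i).+1 * 2 ^ (L - lvl c).

(* Neighbors: interior-disjoint and sharing part of a (d-1)-facet, i.e. in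
   exactly one coordinate the sides touch at an endpoint, and in all other
   coordinates the sides overlap in an interval of positive length. *)
Definition neighbors {d} (c c' : cell d) : Prop :=
  let L := maxn (lvl c) (lvl c') in
  exists i : 'I_d,
    (hi c i L = lo c' i L \/ hi c' i L = lo c i L) /\
    (forall i', i' != i ->
       maxn (lo c i' L) (lo c' i' L) < minn (hi c i' L) (hi c' i' L)).

(* C is 2^j-smooth in Q: every leaf of Q neighboring C has size at most
   2^j |C|, i.e. 2^-(lvl L) <= 2^j * 2^-(lvl C), i.e. lvl C <= lvl L + j. *)
Definition smooth {d} (Q : {fset cell d}) (j : nat) (C : cell d) : Prop :=
  forall L, leaf Q L -> neighbors L C -> lvl C <= lvl L + j.

(* One step of the extended quadtree construction: given the cells Tj of
   brand j and the union Tcum = T^j, the set Tnext = T_{j+1} consists of the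
   new cells of the (inclusion-)minimal quadtree containing T^j in which all
   cells of Tj are 2^j-smooth. *)
Definition ext_step {d} (j : nat) (Tj Tcum Tnext : {fset cell d}) : Prop :=
  let Q := Tcum `|` Tnext in
  [/\ [disjoint Tcum & Tnext],
      quadtree Q,
      (forall C, C \in Tj -> smooth Q j C) &
      (forall Q' : {fset cell d}, quadtree Q' -> Tcum `<=` Q' ->
         (forall C, C \in Tj -> smooth Q' j C) -> Q `<=` Q')].

Definition Tcum {d} (T : nat -> {fset cell d}) (j : nat) : {fset cell d} :=
  \big[fsetU/fset0]_(1 <= i < j.+1) T i.

Definition extended_quadtree {d} (T : nat -> {fset cell d}) : Prop :=
  quadtree (T 1) /\
  forall j, 1 <= j <= d -> ext_step j (T j) (Tcum T j) (T j.+1).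

(* Main.v *)
Require Import Defs.
From mathcomp Require Import all_boot all_order.
From mathcomp Require Import finmap.
From mathcomp Require Import zify.
Set Implicit Arguments. Unset Strict Implicit. Unset Printing Implicit Defensive.


Definition Bits d := {ffun 'I_d -> bool}.
Definition chld {d} (y : cell d) (b : Bits d) : cell d :=
  ((lvl y).+1, [ffun i => 2 * pos y i + b i]).
Definition bitsof {d} (c : cell d) : Bits d := [ffun i => odd (pos c i)].
Definition par {d} (c : cell d) : cell d := ((lvl c).-1, [ffun i => pos c i %/ 2]).
Definition b0 {d} : Bits d := [ffun _ => false].
Definition validb {d} (c : cell d) : bool := [forall i, pos c i < 2 ^ lvl c].
Definition touchc {d} (y x : cell d) : bool :=
  (lvl x == (lvl y).+1) &&
  [forall i, (2 * pos y i <= (pos x i).+1) && (pos x i <= 2 * pos y i + 2)].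
Definition cand {d} (x : cell d) (b : Bits d) : cell d :=
  ((lvl x).-1, [ffun i => if b i then (pos x i).+1 %/ 2 else ((pos x i).+1 %/ 2).-1]).
Definition anc {d} (N : cell d) (k : nat) : cell d :=
  (k, [ffun i => pos N i %/ 2 ^ (lvl N - k)]).

Ltac unf := unfold chld, par, anc, cand, bitsof, b0, root_cell, touchc, pos, lvl; simpl; rewrite ?ffunE; simpl.

Lemma cell_eq d (c c' : cell d) : lvl c = lvl c' -> (forall i, pos c i = pos c' i) -> c = c'.
Proof.
case: c => l f; case: c' => l' f'; rewrite /lvl /pos /= => -> H.
by congr pair; apply/ffunP => i.
Qed.

Lemma validP d (c : cell d) : reflect (valid_cell c) (validb c).
Proof. exact: forallP. Qed.

Lemma chld_is_child d (y : cell d) b : is_child (chld y b) y.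
Proof.
split => // i; rewrite /pos /chld /= ffunE /pos.
case: (b i) => /=; lia.
Qed.

Lemma child_uniq d (c' c1 c2 : cell d) : is_child c' c1 -> is_child c' c2 -> c1 = c2.
Proof.
move=> [h1 p1] [h2 p2]; apply: cell_eq; first by move: h1 h2 => ->; case.
by move=> i; rewrite -p1 -p2.
Qed.

Lemma child_chld d (c' c : cell d) : is_child c' c -> c' = chld c (bitsof c').
Proof.
move=> [h p]; apply: cell_eq => [|i]; first by rewrite h.
rewrite /pos /chld /bitsof /= !ffunE -(p i) /pos.
have := odd_double_half (c'.2 i); rewrite -divn2; lia.
Qed.

Lemma chld_valid d (y : cell d) b : valid_cell y -> valid_cell (chld y b).
Proof.
move=> v i; move: (v i); unf; rewrite expnS.
case: (b i) => /=; lia.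
Qed.

Lemma valid_root d (c : cell d) : valid_cell c -> lvl c = 0 -> c = root_cell d.
Proof.
move=> v h; apply: cell_eq => // i; have := v i; rewrite h /root_cell /pos /= ffunE.
lia.
Qed.

Lemma par_child d (y : cell d) : 0 < lvl y -> is_child y (par y).
Proof. by move=> h; split => [|i]; rewrite /par /lvl /pos /= ?ffunE //; rewrite prednK. Qed.

Lemma par_valid d (y : cell d) : valid_cell y -> valid_cell (par y).
Proof.
move=> v i; have := v i; rewrite /par /pos /lvl /= ffunE.
case: (y.1) => [|l] /=; rewrite ?expnS; lia.
Qed.

Lemma anc_in d (Q : {fset cell d}) (N : cell d) k : quadtree Q -> N \in Q -> k <= lvl N -> anc N k \in Q.
Proof.
case=> _ _ pc _ NQ.
rewrite /lvl; move eq: (N.1 - k) => n; elim: n k eq => [|n IH] k eq kN.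
  have -> : anc N k = N; last by [].
  apply: cell_eq => [|i]; rewrite /anc /lvl /pos /= ?ffunE; first lia.
  by rewrite eq expn0 divn1.
apply: (pc (anc N k.+1)); first by apply: IH; lia.
split => // i; rewrite /anc /pos /lvl /= !ffunE -divnMA -expnSr.
by congr (_ %/ 2 ^ _); lia.
Qed.

Definition Iset d (T1 : {fset cell d}) : {fset cell d} :=
  seq_fset tt [seq x <- T1 | chld x b0 \in T1].
Definition Zset d (T1 : {fset cell d}) : {fset cell d} :=
  seq_fset tt (Iset T1 ++ [seq y <- [seq cand x b | x <- Iset T1, b <- enum (Bits d)] | validb y]).
Definition Vset d (T1 : {fset cell d}) : {fset cell d} :=
  seq_fset tt (root_cell d :: [seq chld y b | y <- Zset T1, b <- enum (Bits d)]).

Lemma inI d (T1 : {fset cell d}) x : (x \in Iset T1) = (x \in T1) && (chld x b0 \in T1).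
Proof. by rewrite seq_fsetE mem_filter andbC. Qed.

Lemma inZ d (T1 : {fset cell d}) y : y \in Zset T1 ->
  y \in Iset T1 \/ exists x b, [/\ x \in Iset T1, y = cand x b & validb y].
Proof.
rewrite seq_fsetE mem_cat => /orP [->|]; first by left.
rewrite mem_filter => /andP [vy /allpairsP [[x b] [/= xI _ e]]].
by right; exists x, b; split.
Qed.

Lemma Z_touch d (T1 : {fset cell d}) (x y : cell d) :
  x \in Iset T1 -> touchc y x -> validb y -> y \in Zset T1.
Proof.
move=> xI /andP [/eqP hl /forallP ht] vy.
rewrite seq_fsetE mem_cat; apply/orP; right; rewrite mem_filter vy /=.
apply/allpairsP; exists (x, [ffun i => pos y i == (pos x i).+1 %/ 2]) => /=.
split => //; first by rewrite mem_enum.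
apply: cell_eq => [|i]; first by move: hl; rewrite /cand /lvl /= => ->.
move: (ht i); rewrite /cand /pos /= ffunE /pos.
rewrite ffunE; case: eqP => [//|ne] /andP [h1 h2]; lia.
Qed.

Lemma inV d (T1 : {fset cell d}) c :
  c \in Vset T1 <-> c = root_cell d \/ exists y b, y \in Zset T1 /\ c = chld y b.
Proof.
rewrite seq_fsetE in_cons; split.
  case/orP => [/eqP ->|/allpairsP [[y b] [/= yZ _ ->]]]; first by left.
  by right; exists y, b.
case => [->|[y [b [yZ ->]]]]; first by rewrite eqxx.
apply/orP; right; apply/allpairsP; exists (y, b) => /=; split => //.
by rewrite mem_enum.
Qed.

Section Q.
Context (d : nat) (T1 : {fset cell d}) (qT : quadtree T1).

Lemma I_sub (x : cell d) : x \in Iset T1 -> x \in T1.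
Proof. by rewrite inI => /andP []. Qed.

Lemma I_Z (x : cell d) : x \in Iset T1 -> x \in Zset T1.
Proof. by move=> h; rewrite seq_fsetE mem_cat h. Qed.

Lemma I_of_child (x c' : cell d) : x \in T1 -> c' \in T1 -> is_child c' x -> x \in Iset T1.
Proof.
case: qT => _ _ _ p4 xT cT ch; rewrite inI xT /=.
by apply: (p4 x xT _ (chld x b0)); [exists c' | apply: chld_is_child].
Qed.

Lemma I_par (x : cell d) : x \in T1 -> 0 < lvl x -> par x \in Iset T1.
Proof.
case: qT => _ _ p3 _ xT l; have pc := par_child l.
apply: (I_of_child _ xT pc); exact: (p3 _ _ xT pc).
Qed.

Lemma cell_valid_T (x : cell d) : x \in T1 -> valid_cell x.
Proof. by case: qT => _ p2 _ _; apply: p2. Qed.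

Lemma Z_valid (y : cell d) : y \in Zset T1 -> valid_cell y.
Proof.
case/inZ => [/I_sub /cell_valid_T //|[x [b [_ _ /validP //]]]].
Qed.

Lemma Z_par (y : cell d) : y \in Zset T1 -> 0 < lvl y -> par y \in Zset T1.
Proof.
move=> yZ l; case/inZ: (yZ) => [yI|[x [b [xI ey vy]]]].
  by apply: I_Z; apply: I_par => //; apply: I_sub.
have lx : 0 < lvl x by move: l; rewrite ey /cand /lvl /=; lia.
have pxI : par x \in Iset T1 by apply: I_par => //; apply: I_sub.
apply: (Z_touch pxI); last by apply/validP; apply: par_valid; apply/validP.
apply/andP; split.
  by apply/eqP; move: l lx; rewrite ey /cand /par /lvl /=; lia.
apply/forallP => i; rewrite ey; unf.
case: (b i); lia.
Qed.

Lemma Z_coarse (y : cell d) : y \in Zset T1 -> 0 < lvl y ->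
  exists g, g \in Iset T1 /\ touchc g y.
Proof.
move=> yZ l; case/inZ: (yZ) => [yI|[x [b [xI ey vy]]]].
  exists (par y); split; first by apply: I_par => //; apply: I_sub.
  apply/andP; split; first by apply/eqP; move: l; unf; lia.
  by apply/forallP => i; unf; lia.
have lx : 1 < lvl x by move: l; rewrite ey /cand /lvl /=; lia.
have pxI : par x \in Iset T1 by apply: I_par => //; [apply: I_sub | lia].
exists (par (par x)); split.
  by apply: I_par; [apply: I_sub | move: lx; unf; lia].
apply/andP; split.
  by apply/eqP; move: lx; rewrite ey; unf; lia.
apply/forallP => i; rewrite ey; unf.
case: (b i); lia.
Qed.

Lemma V_quadtree : quadtree (Vset T1).
Proof.
have rootV : root_cell d \in Vset T1 by apply/inV; left.
have chV : forall y b, y \in Zset T1 -> chld y b \in Vset T1.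
  by move=> y b yZ; apply/inV; right; exists y, b.
have ZV : forall y, y \in Zset T1 -> y \in Vset T1.
  move=> y yZ; case: (posnP (lvl y)) => l.
    by rewrite (valid_root (Z_valid yZ) l).
  rewrite (child_chld (par_child l)); apply: chV; exact: Z_par.
have parZ : forall c' c, c' \in Vset T1 -> is_child c' c -> c \in Zset T1.
  move=> c' c /inV [->|[y [b [yZ ->]]]] ch.
    by case: ch; rewrite /root_cell /lvl.
  by rewrite (child_uniq ch (chld_is_child y b)).
split => //.
- move=> c /inV [->|[y [b [yZ ->]]]].
    by move=> i; rewrite /root_cell /pos /lvl /= ffunE.
  by apply: chld_valid; apply: Z_valid.
- by move=> c' c cV ch; apply: ZV; apply: parZ cV ch.
- move=> c cV [c' ch c'V] c'' ch''.
  rewrite (child_chld ch''); apply: chV; exact: parZ c'V ch.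
Qed.

Lemma T1_sub_V : forall x, x \in T1 -> x \in Vset T1.
Proof.
move=> x xT; apply/inV; case: (posnP (lvl x)) => l.
  by left; apply: valid_root => //; apply: cell_valid_T.
right; exists (par x), (bitsof x); split; first by apply: I_Z; apply: I_par.
exact: child_chld (par_child l).
Qed.

End Q.

Lemma ar_over D S L c : 0 < D -> 0 < S -> L * (D * S) < c.+1 -> c < L.+1 * (D * S) ->
  c %/ D %/ S = L.
Proof.
move=> D0 S0 h1 h2; rewrite -divnMA; have DS0 : 0 < D * S by rewrite muln_gt0 D0.
apply/eqP; rewrite eqn_leq leq_divRL // -ltnS ltn_divLR //.
by rewrite h2 -ltnS h1.
Qed.

Lemma ar_case1 D S L c : 0 < D -> 0 < S -> L.+1 * (D * S) = c ->
  (c %/ D).-1 %/ S = L /\ (c %/ D).-1 * D + D = c.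
Proof.
move=> D0 S0 h; have e : c %/ D = L.+1 * S by rewrite -h mulnCA mulKn.
rewrite e; split.
  apply/eqP; rewrite eqn_leq leq_divRL // -ltnS ltn_divLR //.
  rewrite mulSn; set P := L * S; apply/andP; split; lia.
have P0 : 0 < L.+1 * S by rewrite muln_gt0.
by rewrite -mulSnr prednK // -h mulnAC mulnA.
Qed.

Lemma ar_case2 D S L c : 0 < D -> 0 < S -> c.+1 = L * (D * S) ->
  c.+1 %/ D %/ S = L /\ c.+1 %/ D * D = c.+1.
Proof.
move=> D0 S0 h; have e : c.+1 %/ D = L * S by rewrite h mulnCA mulKn.
rewrite e mulnK //; split => //.
by rewrite h mulnAC mulnA.
Qed.

Lemma desc_contra d (Q : {fset cell d}) (L N : cell d) :
  quadtree Q -> leaf Q L -> N \in Q -> lvl L < lvl N ->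
  (forall k, pos N k %/ 2 ^ (lvl N - lvl L) = pos L k) -> False.
Proof.
move=> qQ [_ lf] NQ lt hk.
have := anc_in qQ NQ lt; apply/negP; apply: lf.
split => // k; rewrite /anc /pos /lvl /= ffunE -divnMA -expnSr.
have -> : (N.1 - L.1.+1).+1 = lvl N - lvl L by rewrite /lvl in lt *; lia.
exact: hk.
Qed.

Lemma geom d (Q : {fset cell d}) (L C : cell d) t :
  quadtree Q -> leaf Q L -> neighbors L C -> lvl L < t -> t <= lvl C ->
  (forall N : cell d, lvl N = t -> valid_cell N ->
     (forall k, pos N k = pos C k %/ 2 ^ (lvl C - t) \/
                pos N k * 2 ^ (lvl C - t) + 2 ^ (lvl C - t) = pos C k \/
                pos N k * 2 ^ (lvl C - t) = (pos C k).+1) ->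
     N \in Q) -> False.
Proof.
move=> qQ lf [i [hs ho]] lt tC HQ.
have vL : valid_cell L by case: qQ => _ p2 _ _; apply: p2; case: lf.
set D := 2 ^ (lvl C - t) in HQ *; set S := 2 ^ (t - lvl L).
have D0 : 0 < D by rewrite expn_gt0.
have S0 : 0 < S by rewrite expn_gt0.
have eM : maxn (lvl L) (lvl C) = lvl C by apply/maxn_idPr; lia.
have eDS : 2 ^ (lvl C - lvl L) = D * S by rewrite -expnD; congr (2 ^ _); lia.
move: hs ho; rewrite /hi /lo eM subnn expn0 !muln1 eDS => hs ho.
pose N : cell d := (t, [ffun k => if k == i then
   (if (pos L i).+1 * (D * S) == pos C i then (pos C i %/ D).-1 else (pos C i).+1 %/ D)
   else pos C k %/ D]).
have P : forall k, pos N k %/ S = pos L k /\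
   (pos N k = pos C k %/ D \/ pos N k * D + D = pos C k \/ pos N k * D = (pos C k).+1).
  move=> k; rewrite /N /pos /= ffunE -!/(pos _ _).
  case: eqP => [->|ne].
    case: eqP => [e|ne2].
      by have [h1 h2] := ar_case1 D0 S0 e; split => //; right; left.
    have e : (pos C i).+1 = pos L i * (D * S) by case: hs.
    by have [h1 h2] := ar_case2 D0 S0 e; split => //; right; right.
  have := ho k; rewrite (introN eqP ne) => /(_ isT) h.
  split; last by left.
  apply: ar_over => //; move: h; lia.
apply: (desc_contra qQ lf (HQ N erefl _ (fun k => (P k).2))) => //.
  have eT : 2 ^ lvl L * S = 2 ^ t by rewrite -expnD; congr (2 ^ _); lia.
  move=> k; change (pos N k < 2 ^ t); have h := vL k; rewrite -(P k).1 in h.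
  by move: h; rewrite ltn_divLR // eT.
by move=> k; rewrite /N /lvl /=; exact: (P k).1.
Qed.

Section S.
Context (d : nat) (T1 : {fset cell d}) (qT : quadtree T1).

Lemma N_in_V (N x : cell d) : x \in Iset T1 -> 0 < lvl N -> valid_cell N ->
  touchc (par N) x -> N \in Vset T1.
Proof.
move=> xI l vN tc; apply/inV; right; exists (par N), (bitsof N); split.
  by apply: (Z_touch xI tc); apply/validP; apply: par_valid.
exact: child_chld (par_child l).
Qed.

Lemma smooth1 (C : cell d) : C \in T1 -> smooth (Vset T1) 1 C.
Proof.
move=> CT L lf nb; case: (leqP (lvl C) (lvl L + 1)) => // h; exfalso.
apply: (geom (t := (lvl C).-1) (V_quadtree qT) lf nb); try lia.
move=> N eN vN hc; apply: (N_in_V (x := par C)) => //; try lia.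
  by apply: I_par => //; lia.
apply/andP; split; first by apply/eqP; move: eN h; unf; lia.
apply/forallP => k; have := hc k.
have -> : lvl C - (lvl C).-1 = 1 by lia.
unf; lia.
Qed.

Lemma smooth2 (C : cell d) : C \in Vset T1 -> smooth (Vset T1) 2 C.
Proof.
move=> CV L lf nb; case: (leqP (lvl C) (lvl L + 2)) => // h; exfalso.
case/inV: CV h nb => [-> |[y [b [yZ ->]]]] h nb; first by move: h; rewrite /lvl /root_cell /=.
have ly2 : 1 < lvl y by move: h; unf; lia.
have ly : 0 < lvl y by lia.
have [g [gI tg]] := Z_coarse qT yZ ly.
apply: (geom (t := lvl y - 1) (V_quadtree qT) lf nb); try (move: h; unf; lia).
move=> N eN vN hc; apply: (N_in_V gI) => //; try lia.
move: tg => /andP [/eqP lg /forallP tg].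
apply/andP; split; first by apply/eqP; move: eN lg ly2; unf; lia.
apply/forallP => k; have := hc k; have := tg k.
have -> : lvl (chld y b) - (lvl y - 1) = 2 by move: ly; unf; lia.
unf; case: (b k) => /=; lia.
Qed.

End S.

Lemma size_enum_bits d : size (enum (Bits d)) = 2 ^ d.
Proof. by rewrite -cardE card_ffun card_bool card_ord. Qed.

Lemma cardI d (T1 : {fset cell d}) : quadtree T1 -> #|` Iset T1| * 2 ^ d <= #|` T1|.
Proof.
move=> qT; rewrite -size_enum_bits -(size_allpairs (@chld d)).
rewrite -[#|` T1|]/(size (enum_fset T1)).
apply: uniq_leq_size.
  apply: allpairs_uniq; [exact: fset_uniq | exact: enum_uniq |].
  move=> [x b] [x' b'] _ _ /= e.
  have hl : lvl x = lvl x' by move: (congr1 lvl e); rewrite /chld /lvl /=; case.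
  have hp : forall i, pos x i = pos x' i /\ b i = b' i.
    move=> i; move: (congr1 (fun c : cell d => pos c i) e); unf.
    by case: (b i); case: (b' i) => /=; lia.
  congr pair; first by apply: cell_eq => // i; case: (hp i).
  by apply/ffunP => i; case: (hp i).
move=> c /allpairsP [[x b] [/= xI _ ->]].
case: qT => _ _ _ p4; move: xI; rewrite inI => /andP [xT c0].
apply: (p4 x xT) => //; [exists (chld x b0) => //; apply: chld_is_child | apply: chld_is_child].
Qed.

Lemma cardZ d (T1 : {fset cell d}) : #|` Zset T1| <= #|` Iset T1| + #|` Iset T1| * 2 ^ d.
Proof.
rewrite /Zset size_seq_fset (leq_trans (size_undup _)) // size_cat leq_add2l.
by rewrite size_filter (leq_trans (count_size _ _)) // size_allpairs size_enum_bits.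
Qed.

Lemma cardV d (T1 : {fset cell d}) : #|` Vset T1| <= 1 + #|` Zset T1| * 2 ^ d.
Proof.
rewrite /Vset size_seq_fset (leq_trans (size_undup _)) //= add1n ltnS.
by rewrite size_allpairs size_enum_bits.
Qed.

Local Open Scope fset_scope.

Lemma Tcum1 d (T : nat -> {fset cell d}) : Tcum T 1 = T 1.
Proof. by rewrite /Tcum big_nat1. Qed.

Lemma TcumS d (T : nat -> {fset cell d}) j : 0 < j -> Tcum T j.+1 = Tcum T j `|` T j.+1.
Proof. by move=> j0; rewrite /Tcum big_nat_recr. Qed.

Lemma T_sub_Tcum d (T : nat -> {fset cell d}) j : 0 < j -> T j `<=` Tcum T j.
Proof.
case: j => // [[|j]] _; first by rewrite Tcum1.
by rewrite TcumS // fsubsetUr.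
Qed.

Theorem lemma13 :
  exists c : nat, forall (d : nat) (T : nat -> {fset cell d}),
    extended_quadtree T ->
    forall j, 1 <= j <= d.+1 -> #|` T j| <= c * 2 ^ d * #|` T 1|.
Proof.
exists 3 => d T [qT steps].
have sub : forall j, 1 <= j <= d.+1 -> Tcum T j `<=` Vset (T 1).
  elim => [//|j IH] /andP [j1 jd].
  case: (posnP j) => [-> | j0].
    by rewrite Tcum1; apply/fsubsetP => x; apply: T1_sub_V.
  have [_ _ _ mn] := steps j (introT andP (conj j0 jd)).
  rewrite TcumS //; apply: mn; first exact: V_quadtree.
    by apply: IH; rewrite j0 /=; lia.
  move=> C CT.
  have CV : C \in Vset (T 1).
    move/fsubsetP: (IH (introT andP (conj j0 (ltnW jd)))); apply.
    by move/fsubsetP: (@T_sub_Tcum d T j j0); apply.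
  case: (ltnP j 2) => j2.
    have -> : j = 1 by lia.
    apply: smooth1 => //; move: CT; have -> : j = 1 by lia. by [].
  move=> L lf nb; have := smooth2 qT CV lf nb; lia.
move=> j hj.
have TjV : T j `<=` Vset (T 1).
  apply: fsubset_trans (sub j hj).
  by apply: (@T_sub_Tcum d T j); case/andP: hj.
apply: (leq_trans (fsubset_leq_card TjV)).
have hI := cardI qT; have hZ := cardZ (T 1); have hV := cardV (T 1).
have n1 : 0 < #|` T 1|.
  by case: qT => r _ _ _; rewrite cardfs_gt0; apply/fset0Pn; exists (root_cell d).
have P1 : 0 < 2 ^ d by rewrite expn_gt0.
move: hI hZ hV n1 P1.
set A := #|` Iset (T 1)|; set Z := #|` Zset (T 1)|; set V := #|` Vset (T 1)|.
set n := #|` T 1|; set P := 2 ^ d => hI hZ hV n1 P1.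
nia.
Qed.
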